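(* Let $(\Sigma_+,\Sigma_-,N_1,N_2,N_3)$ be a solution of the Wainwright–Hsu system satisfying the constraint, with $N_1<0$ and $N_2,N_3>0$. Then for every $\epsilon>0$ there is $T$ such that $-N_1(\tau)(N_2+N_3)(\tau)\geq\frac12-\epsilon$ for all $\tau\geq T$.
   Context: Wainwright–Hsu system: for functions $N_1,N_2,N_3,\Sigma_+,\Sigma_-$ of $\tau\in\mathbb{R}$ (prime denotes $d/d\tau$), $N_1'=(q-4\Sigma_+)N_1$, $N_2'=(q+2\Sigma_++2\sqrt3\Sigma_-)N_2$, $N_3'=(q+2\Sigma_+-2\sqrt3\Sigma_-)N_3$, $\Sigma_+'=-(2-q)\Sigma_+-3S_+$, $\Sigma_-'=-(2-q)\Sigma_--3S_-$, where $q=2(\Sigma_+^2+\Sigma_-^2)$, $S_+=\frac12[(N_2-N_3)^2-N_1(2N_1-N_2-N_3)]$, $S_-=\frac{\sqrt3}{2}(N_3-N_2)(N_1-N_2-N_3)$, together with the constraint $\Sigma_+^2+\Sigma_-^2+\frac34[N_1^2+N_2^2+N_3^2-2(N_1N_2+N_2N_3+N_1N_3)]=1$. Solutions with these sign conditions exist for all $\tau\in\mathbb{R}$. *)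

(* Defs.v *)
From Stdlib Require Import Reals.
Open Scope R_scope.

Definition WH_q (Sp Sm : R) : R := 2 * (Sp ^ 2 + Sm ^ 2).

Definition WH_Splus (N1 N2 N3 : R) : R :=
  / 2 * ((N2 - N3) ^ 2 - N1 * (2 * N1 - N2 - N3)).

Definition WH_Sminus (N1 N2 N3 : R) : R :=
  sqrt 3 / 2 * (N3 - N2) * (N1 - N2 - N3).

Definition WH_constraint (N1 N2 N3 Sp Sm : R) : Prop :=
  Sp ^ 2 + Sm ^ 2
  + 3 / 4 * (N1 ^ 2 + N2 ^ 2 + N3 ^ 2 - 2 * (N1 * N2 + N2 * N3 + N1 * N3)) = 1.

Definition WH_solution (N1 N2 N3 Sp Sm : R -> R) : Prop :=
  forall t : R,
    let q := WH_q (Sp t) (Sm t) in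
    derivable_pt_lim N1 t ((q - 4 * Sp t) * N1 t) /\
    derivable_pt_lim N2 t ((q + 2 * Sp t + 2 * sqrt 3 * Sm t) * N2 t) /\
    derivable_pt_lim N3 t ((q + 2 * Sp t - 2 * sqrt 3 * Sm t) * N3 t) /\
    derivable_pt_lim Sp t (- (2 - q) * Sp t - 3 * WH_Splus (N1 t) (N2 t) (N3 t)) /\
    derivable_pt_lim Sm t (- (2 - q) * Sm t - 3 * WH_Sminus (N1 t) (N2 t) (N3 t)) /\
    WH_constraint (N1 t) (N2 t) (N3 t) (Sp t) (Sm t).

(* Main.v *)
Require Import Defs.
From Stdlib Require Import Reals Lra Psatz Classical.
Open Scope R_scope.

Lemma bound_Smd (Sm d s : R) : s*s = 3 -> 0 < s -> Sm^2 + 3/4*d^2 <= 1 -> s * Rabs (Sm*d) <= 1.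
Proof.
  intros Hs Hs0 H. rewrite Rabs_mult.
  assert (K: forall a b, 0 <= (a - s/2*b)^2) by (intros; apply pow2_ge_0).
  assert (K2: forall a b, (a - s/2*b)^2 = a^2 - s*(a*b) + s*s/4*b^2) by (intros; field). rewrite Hs in K2.
  unfold Rabs; destruct (Rcase_abs Sm); destruct (Rcase_abs d).
  - specialize (K2 Sm d). specialize (K Sm d). nra.
  - specialize (K2 (-Sm) d). specialize (K (-Sm) d). nra.
  - specialize (K2 Sm (-d)). specialize (K Sm (-d)). nra.
  - specialize (K2 Sm d). specialize (K Sm d). nra.
Qed.

Lemma A1 (m n d Sp Sm : R) : 0 < m -> 0 < n ->
  Sp^2 + Sm^2 + 3/4*(m^2 + d^2 + 2*m*n) = 1 ->
  - (2 - 2*(Sp^2+Sm^2)) * Sp - 3 * (/2 * (d^2 - 2*m^2 - m*n))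
  >= 1/2 - 5*(Sp^2+Sm^2) - 9/4*d^2.
Proof. intros Hm Hn H.
  assert (E: - (2 - 2*(Sp^2+Sm^2)) * Sp - 3 * (/2 * (d^2 - 2*m^2 - m*n)) =
     (1 - (Sp^2+Sm^2))*(1-2*Sp) - 9/4*d^2 + 9/4*m^2) by nra.
  rewrite E.
  assert (0 <= Sm^2) by apply pow2_ge_0. assert (0 <= m^2) by apply pow2_ge_0.
  assert (0 <= d^2) by apply pow2_ge_0. assert (0 < m*n) by nra.
  assert (HS: Sp^2+Sm^2 <= 1) by nra.
  assert (Hp: -1 <= Sp <= 1) by nra.
  assert (0 <= (Sp+1)*(Sp^2+Sm^2)) by nra.
  assert (0 <= (2*Sp - 1/2)^2) by apply pow2_ge_0.
  nra. Qed.

Lemma absW (Sm d k : R) : 0 < k -> Rabs d < k -> Rabs (Sm*d/k) <= Rabs Sm /\ Rabs (Sm*d/k) * k = Rabs Sm * Rabs d.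
Proof.
  intros Hk Hd. unfold Rdiv. rewrite !Rabs_mult, (Rabs_inv k), (Rabs_right k) by lra.
  split.
  - pose proof (Rabs_pos Sm). pose proof (Rabs_pos d).
    assert (Rabs d * / k <= 1). { apply (Rmult_le_reg_r k); [lra|]. field_simplify; lra. }
    nra.
  - field. lra.
Qed.

Lemma C2 (m n d Sp Sm s k0 : R) : 0 < m -> 0 < n -> Rabs d < n ->
  Sp^2 + Sm^2 + 3/4*(m^2 + d^2 + 2*m*n) = 1 -> s*s = 3 -> 0 < s -> 0 < k0 -> k0 <= n ->
  let S := Sp^2+Sm^2 in let k := m+n in let W := Sm*d/k in
  let Wp := (2*S-2)*W - (3*s/2)*d^2 + 2*s*Sm^2*n/k + 6*Sp*m*W/k - 2*s*W^2 in
  let Spp := - (2 - 2*S) * Sp - 3 * (/2 * (d^2 - 2*m^2 - m*n)) in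
  let b := 13/(6*s) in
  Spp - b * Wp + (5 + b*(2*s+3) + b^2/k0^2) * S >= 1/2.
Proof.
  intros Hm Hn Hd H Hs Hs0 Hk0 Hk0n S k W Wp Spp b.
  assert (HSpp: Spp >= 1/2 - 5*S - 9/4*d^2) by (apply (A1 m n d Sp Sm); auto).
  assert (Hk: 0 < k) by (unfold k; lra).
  assert (Hdk: Rabs d < k) by (unfold k; lra).
  destruct (absW Sm d k Hk Hdk) as [HW1 HW2]. fold W in HW1, HW2.
  assert (Hb: 0 < b) by (unfold b; apply Rdiv_lt_0_compat; lra).
  assert (Hb2: b * (3*s/2) = 13/4) by (unfold b; field; lra).
  assert (HS0: 0 <= S) by (unfold S; nra).
  assert (HS1: S <= 1) by (unfold S; nra).
  assert (HWabs: - Rabs W <= W <= Rabs W) by (unfold Rabs; destruct Rcase_abs; lra).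
  assert (b1: (2*S-2)*W <= 2 * Rabs W) by nra.
  assert (b2: 2*s*Sm^2*n/k <= 2*s*S).
  { assert (n/k <= 1) by (apply (Rmult_le_reg_r k); [lra|]; field_simplify; unfold k; lra).
    assert (0 <= Sm^2) by apply pow2_ge_0.
    replace (2*s*Sm^2*n/k) with (2*s*Sm^2*(n/k)) by (field; lra).
    unfold S. assert (0<= Sp^2) by apply pow2_ge_0.
    assert (0 <= Sm^2*(1 - n/k)) by (apply Rmult_le_pos; lra). nra. }
  assert (b3: 6*Sp*m*W/k <= 3*S).
  { assert (0 < m/k <= 1) by (split; [apply Rdiv_lt_0_compat; lra|apply (Rmult_le_reg_r k); [lra|]; field_simplify; unfold k; lra]).
    replace (6*Sp*m*W/k) with (6*(m/k)*(Sp*W)) by (field; lra).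
    assert (Rabs (Sp*W) <= Rabs Sp * Rabs Sm) by (rewrite Rabs_mult; apply Rmult_le_compat_l; [apply Rabs_pos|auto]).
    assert (2*(Rabs Sp * Rabs Sm) <= S).
    { unfold S. assert (0 <= (Rabs Sp - Rabs Sm)^2) by apply pow2_ge_0.
      assert (Sp^2 = Rabs Sp ^2) by (unfold Rabs; destruct Rcase_abs; nra).
      assert (Sm^2 = Rabs Sm ^2) by (unfold Rabs; destruct Rcase_abs; nra). nra. }
    assert (Sp*W <= Rabs (Sp*W)) by apply RRle_abs.
    assert (Sp*W <= S/2) by lra.
    assert (0 <= S) by lra. nra. }
  assert (b4: 0 <= W^2) by apply pow2_ge_0.
  assert (c1: 2*b*Rabs W <= d^2 + b^2*S/k0^2).
  { assert (Rabs W * k0 <= Rabs Sm * Rabs d) by (rewrite <- HW2; apply Rmult_le_compat_l; [apply Rabs_pos|unfold k; lra]).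
    assert (0 <= (Rabs d - b*Rabs Sm/k0)^2) by apply pow2_ge_0.
    assert (Ed: d^2 = Rabs d ^2) by (unfold Rabs; destruct Rcase_abs; nra).
    assert (Em: Sm^2 = Rabs Sm ^2) by (unfold Rabs; destruct Rcase_abs; nra).
    assert (Sm^2 <= S) by (unfold S; nra).
    assert (2*b*Rabs W <= 2*b*(Rabs Sm * Rabs d)/k0).
    { apply (Rmult_le_reg_r k0); [lra|]. field_simplify; try lra. nra. }
    assert ((Rabs d - b*Rabs Sm/k0)^2 = d^2 - 2*b*(Rabs Sm * Rabs d)/k0 + b^2*Sm^2/k0^2).
    { rewrite Ed, Em. field. lra. }
    assert (b^2*Sm^2/k0^2 <= b^2*S/k0^2).
    { unfold Rdiv. apply Rmult_le_compat_r. left; apply Rinv_0_lt_compat; nra.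
      apply Rmult_le_compat_l; nra. }
    lra. }
  assert (HWp: Wp <= 2*Rabs W - (3*s/2)*d^2 + (2*s+3)*S) by (unfold Wp; nra).
  assert (b*Wp <= b*(2*Rabs W - (3*s/2)*d^2 + (2*s+3)*S)) by (apply Rmult_le_compat_l; lra).
  nra.
Qed.

Lemma C4 (m n d Sp Sm s : R) : 0 < m -> 1 <= n -> Rabs d < n ->
  Sp^2 + Sm^2 + 3/4*(m^2 + d^2 + 2*m*n) = 1 -> s*s = 3 -> 0 < s ->
  let S := Sp^2+Sm^2 in let k := m+n in let W := Sm*d/k in
  let Wp := (2*S-2)*W - (3*s/2)*d^2 + 2*s*Sm^2*n/k + 6*Sp*m*W/k - 2*s*W^2 in
  (4*S - 2*Sp + 2*s*Sm*d/n) - Wp/s >= 3/2 - 3*(m*n) - 10/n /\ Rabs W / s <= 1/n.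
Proof.
  intros Hm Hn Hd H Hs Hs0 S k W Wp.
  assert (Hk: 0 < k) by (unfold k; lra).
  assert (Hdk: Rabs d < k) by (unfold k; lra).
  destruct (absW Sm d k Hk Hdk) as [HW1 HW2]. fold W in HW1, HW2.
  assert (HS0: 0 <= S) by (unfold S; nra).
  assert (Hmn: 0 < m*n) by nra.
  assert (HS1: S <= 1) by (unfold S; nra).
  assert (HSmd: s * Rabs (Sm*d) <= 1) by (apply bound_Smd; auto; nra).
  assert (HWn: Rabs W * n <= Rabs (Sm*d)) by (rewrite Rabs_mult, <- HW2; apply Rmult_le_compat_l; [apply Rabs_pos|unfold k; lra]).
  assert (HWs: Rabs W / s <= 1/(3*n)).
  { apply (Rmult_le_reg_r (3*n*s)); [nra|]. field_simplify; try lra.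
    pose proof (Rabs_pos W). nra. }
  split; [|apply (Rle_trans _ _ _ HWs); apply (Rmult_le_reg_r (3*n)); [nra|]; field_simplify; lra].
  assert (HWabs: - Rabs W <= W <= Rabs W) by (unfold Rabs; destruct Rcase_abs; lra).
  assert (Sp^2 <= 1) by (unfold S in HS1; nra).
  assert (HSp: Rabs Sp <= 1) by (unfold Rabs; destruct Rcase_abs; nra).
  assert (E: (4*S - 2*Sp + 2*s*Sm*d/n) - Wp/s =
     (4*S - 2*Sp + 3/2*d^2 - 2*Sm^2*(n/k)) + 2*s*(Sm*d)/n - (2*S-2)*(W/s) - 6*(m/k)*(Sp*(W/s)) + 2*W^2).
  { unfold Wp. field. lra. }
  rewrite E.
  assert (main: 4*S - 2*Sp + 3/2*d^2 - 2*Sm^2*(n/k) >= 3/2 - 3*(m*n) - 3/2*m^2).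
  { assert (n/k <= 1) by (apply (Rmult_le_reg_r k); [lra|]; field_simplify; unfold k; lra).
    assert (0 <= Sm^2*(1 - n/k)) by (apply Rmult_le_pos; [apply pow2_ge_0|lra]).
    assert (0 <= (Sp - 1/2)^2) by apply pow2_ge_0.
    unfold S. nra. }
  assert (e1: 2*s*(Sm*d)/n >= -2/n).
  { assert (- Rabs (Sm*d) <= Sm*d) by (unfold Rabs; destruct Rcase_abs; lra).
    apply Rle_ge. apply (Rmult_le_reg_r n); [lra|]. field_simplify; try lra. nra. }
  assert (e2: - (2*S-2)*(W/s) >= -2/(3*n)).
  { assert (- Rabs W / s <= W/s <= Rabs W / s).
    { unfold Rdiv. split; apply Rmult_le_compat_r; try (left; apply Rinv_0_lt_compat; lra); lra. }
    nra. }
  assert (e3: - 6*(m/k)*(Sp*(W/s)) >= -2/n).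
  { assert (0 < m/k <= 1) by (split; [apply Rdiv_lt_0_compat; lra|apply (Rmult_le_reg_r k); [lra|]; field_simplify; unfold k; lra]).
    assert (Rabs (Sp*(W/s)) <= 1/(3*n)).
    { rewrite Rabs_mult. unfold Rdiv at 1. rewrite Rabs_mult, (Rabs_inv s), (Rabs_right s) by lra.
      fold (Rabs W / s). pose proof (Rabs_pos Sp). pose proof (Rabs_pos W).
      assert (0 <= Rabs W / s) by (unfold Rdiv; apply Rmult_le_pos; [lra|left; apply Rinv_0_lt_compat; lra]).
      nra. }
    assert (Sp*(W/s) <= Rabs (Sp*(W/s))) by apply RRle_abs.
    assert (-2/n = - 6 * (1/(3*n))) by (field; lra).
    assert (0 < 1/(3*n)) by (apply Rdiv_lt_0_compat; lra).
    assert ((m/k)*(Sp*(W/s)) <= 1/(3*n)).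
    { destruct (Rle_lt_dec (Sp*(W/s)) 0). nra. nra. }
    lra. }
  assert (e4: 0 <= 2*W^2) by (assert (0 <= W^2) by apply pow2_ge_0; lra).
  assert (e5: 3/2*m^2 <= 2/(3*n)).
  { assert (m*n <= 2/3) by (unfold S in HS0; nra).
    apply (Rmult_le_reg_r (3*n)); [lra|]. field_simplify; try lra. nra. }
  assert (2/n + 2/(3*n) + 2/n + 2/(3*n) <= 10/n) by (apply (Rmult_le_reg_r (3*n)); [lra|]; field_simplify; lra).
  lra.
Qed.

Lemma deq f x a b : derivable_pt_lim f x a -> a = b -> derivable_pt_lim f x b.
Proof. intros H E; subst; exact H. Qed.
Lemma dmul f g x a b : derivable_pt_lim f x a -> derivable_pt_lim g x b ->
  derivable_pt_lim (fun y => f y * g y) x (a * g x + f x * b).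
Proof. intros; exact (derivable_pt_lim_mult f g x a b H H0). Qed.
Lemma dplus f g x a b : derivable_pt_lim f x a -> derivable_pt_lim g x b ->
  derivable_pt_lim (fun y => f y + g y) x (a + b).
Proof. intros; exact (derivable_pt_lim_plus f g x a b H H0). Qed.
Lemma dminus f g x a b : derivable_pt_lim f x a -> derivable_pt_lim g x b ->
  derivable_pt_lim (fun y => f y - g y) x (a - b).
Proof. intros; exact (derivable_pt_lim_minus f g x a b H H0). Qed.
Lemma dopp f x a : derivable_pt_lim f x a -> derivable_pt_lim (fun y => - f y) x (- a).
Proof. intros; exact (derivable_pt_lim_opp f x a H). Qed.
Lemma ddiv f g x a b : derivable_pt_lim f x a -> derivable_pt_lim g x b -> g x <> 0 ->
  derivable_pt_lim (fun y => f y / g y) x ((a * g x - b * f x) / (g x)²).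
Proof. intros; exact (derivable_pt_lim_div f g x a b H H0 H1). Qed.
Lemma dln f x a : derivable_pt_lim f x a -> 0 < f x ->
  derivable_pt_lim (fun y => ln (f y)) x (a / f x).
Proof. intros. eapply deq. apply (derivable_pt_lim_comp f ln x a (/ f x) H).
  apply derivable_pt_lim_ln; auto. unfold Rdiv; ring. Qed.

Definition Wp_expr (m n d Sp Sm s : R) : R :=
  (2*(Sp^2+Sm^2)-2)*(Sm*d/(m+n)) - (3*s/2)*d^2 + 2*s*Sm^2*n/(m+n)
  + 6*Sp*m*(Sm*d/(m+n))/(m+n) - 2*s*(Sm*d/(m+n))^2.




Lemma sol_at (N1 N2 N3 Sp Sm : R -> R) t : WH_solution N1 N2 N3 Sp Sm ->
  derivable_pt_lim N1 t ((WH_q (Sp t) (Sm t) - 4 * Sp t) * N1 t) /\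
  derivable_pt_lim N2 t ((WH_q (Sp t) (Sm t) + 2 * Sp t + 2 * sqrt 3 * Sm t) * N2 t) /\
  derivable_pt_lim N3 t ((WH_q (Sp t) (Sm t) + 2 * Sp t - 2 * sqrt 3 * Sm t) * N3 t) /\
  derivable_pt_lim Sp t (- (2 - WH_q (Sp t) (Sm t)) * Sp t - 3 * WH_Splus (N1 t) (N2 t) (N3 t)) /\
  derivable_pt_lim Sm t (- (2 - WH_q (Sp t) (Sm t)) * Sm t - 3 * WH_Sminus (N1 t) (N2 t) (N3 t)) /\
  WH_constraint (N1 t) (N2 t) (N3 t) (Sp t) (Sm t).
Proof. intros H. exact (H t). Qed.

Lemma dP (N1 N2 N3 Sp Sm : R -> R) t : WH_solution N1 N2 N3 Sp Sm ->
  derivable_pt_lim (fun x => - N1 x * (N2 x * N3 x)) t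
    (6 * (Sp t ^2 + Sm t ^2) * (- N1 t * (N2 t * N3 t))).
Proof.
  intros H. destruct (sol_at N1 N2 N3 Sp Sm t H) as [d1 [d2 [d3 _]]].
  eapply deq. apply (dmul (fun x => - N1 x) (fun x => N2 x * N3 x)).
  apply dopp, d1. apply (dmul N2 N3); [exact d2|exact d3].
  unfold WH_q; ring.
Qed.

Lemma dW (N1 N2 N3 Sp Sm : R -> R) t : WH_solution N1 N2 N3 Sp Sm ->
  N1 t < 0 -> 0 < N2 t -> 0 < N3 t ->
  derivable_pt_lim (fun x => Sm x * (N2 x - N3 x) / (- N1 x + (N2 x + N3 x))) t
    (Wp_expr (- N1 t) (N2 t + N3 t) (N2 t - N3 t) (Sp t) (Sm t) (sqrt 3)).
Proof.
  intros H h1 h2 h3. destruct (sol_at N1 N2 N3 Sp Sm t H) as [d1 [d2 [d3 [d4 [d5 _]]]]].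
  eapply deq. apply (ddiv (fun x => Sm x * (N2 x - N3 x)) (fun x => - N1 x + (N2 x + N3 x))).
  apply (dmul Sm (fun x => N2 x - N3 x)). exact d5. apply (dminus N2 N3); [exact d2|exact d3].
  apply (dplus (fun x => - N1 x) (fun x => N2 x + N3 x)). apply dopp, d1. apply (dplus N2 N3); [exact d2|exact d3].
  lra.
  unfold Wp_expr, WH_q, WH_Sminus, Rsqr. field. lra.
Qed.

Lemma dlnZ (N1 N2 N3 Sp Sm : R -> R) t : WH_solution N1 N2 N3 Sp Sm ->
  N1 t < 0 -> 0 < N2 t -> 0 < N3 t ->
  derivable_pt_lim (fun x => ln (- N1 x * (N2 x + N3 x))) t
    (4*(Sp t^2+Sm t^2) - 2*Sp t + 2*sqrt 3*Sm t*(N2 t - N3 t)/(N2 t + N3 t)).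
Proof.
  intros H h1 h2 h3. destruct (sol_at N1 N2 N3 Sp Sm t H) as [d1 [d2 [d3 _]]].
  eapply deq. apply (dln (fun x => - N1 x * (N2 x + N3 x))).
  apply (dmul (fun x => - N1 x) (fun x => N2 x + N3 x)). apply dopp, d1. apply (dplus N2 N3); [exact d2|exact d3].
  nra.
  unfold WH_q. field. lra.
Qed.

Lemma dlnP (N1 N2 N3 Sp Sm : R -> R) t : WH_solution N1 N2 N3 Sp Sm ->
  N1 t < 0 -> 0 < N2 t -> 0 < N3 t ->
  derivable_pt_lim (fun x => ln (- N1 x * (N2 x * N3 x))) t (6 * (Sp t ^2 + Sm t ^2)).
Proof.
  intros H h1 h2 h3.
  eapply deq. apply (dln (fun x => - N1 x * (N2 x * N3 x))). apply (dP N1 N2 N3 Sp Sm); exact H.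
  cbv beta. assert (0 < N2 t * N3 t) by nra. nra.
  cbv beta. field. repeat split; lra.
Qed.

Lemma s3 : sqrt 3 * sqrt 3 = 3 /\ 0 < sqrt 3.
Proof. split. apply sqrt_sqrt; lra. apply sqrt_lt_R0; lra. Qed.

Lemma C2' (m n d Sp Sm s k0 : R) : 0 < m -> 0 < n -> Rabs d < n ->
  Sp^2 + Sm^2 + 3/4*(m^2 + d^2 + 2*m*n) = 1 -> s*s = 3 -> 0 < s -> 0 < k0 -> k0 <= n ->
  (- (2 - 2*(Sp^2+Sm^2)) * Sp - 3 * (/2 * (d^2 - 2*m^2 - m*n)))
   - 13/(6*s) * Wp_expr m n d Sp Sm s
   + (5 + 13/(6*s)*(2*s+3) + (13/(6*s))^2/k0^2) * (Sp^2+Sm^2) >= 1/2.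
Proof. intros. exact (C2 m n d Sp Sm s k0 H H0 H1 H2 H3 H4 H5 H6). Qed.

Lemma C4' (m n d Sp Sm s : R) : 0 < m -> 1 <= n -> Rabs d < n ->
  Sp^2 + Sm^2 + 3/4*(m^2 + d^2 + 2*m*n) = 1 -> s*s = 3 -> 0 < s ->
  (4*(Sp^2+Sm^2) - 2*Sp + 2*s*Sm*d/n) - Wp_expr m n d Sp Sm s / s >= 3/2 - 3*(m*n) - 10/n
  /\ Rabs (Sm*d/(m+n)) / s <= 1/n.
Proof. intros. exact (C4 m n d Sp Sm s H H0 H1 H2 H3 H4). Qed.

Lemma pointwise (N1 N2 N3 Sp Sm : R -> R) t : WH_solution N1 N2 N3 Sp Sm ->
  N1 t < 0 -> 0 < N2 t -> 0 < N3 t ->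
  Sp t^2 + Sm t^2 + 3/4*((- N1 t)^2 + (N2 t - N3 t)^2 + 2*(- N1 t)*(N2 t + N3 t)) = 1
  /\ Rabs (N2 t - N3 t) < N2 t + N3 t.
Proof.
  intros H h1 h2 h3. destruct (sol_at N1 N2 N3 Sp Sm t H) as [_ [_ [_ [_ [_ c]]]]].
  unfold WH_constraint in c. split. rewrite <- c. ring.
  unfold Rabs; destruct Rcase_abs; lra.
Qed.

Lemma P_mono (N1 N2 N3 Sp Sm : R -> R) : WH_solution N1 N2 N3 Sp Sm ->
  (forall t : R, N1 t < 0 /\ 0 < N2 t /\ 0 < N3 t) ->
  forall a b, a <= b -> - N1 a * (N2 a * N3 a) <= - N1 b * (N2 b * N3 b).
Proof.
  intros H Hs a b Hab. destruct (Rle_lt_or_eq_dec a b Hab) as [Hlt|Heq]; [|subst; lra].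
  destruct (MVT_cor2 (fun x => - N1 x * (N2 x * N3 x))
    (fun x => 6 * (Sp x ^2 + Sm x ^2) * (- N1 x * (N2 x * N3 x))) a b Hlt) as [c [Ec _]].
  { intros c _. apply dP; auto. }
  destruct (Hs c) as [h1 [h2 h3]].
  assert (0 <= 6 * (Sp c ^2 + Sm c ^2) * (- N1 c * (N2 c * N3 c))).
  { assert (0 <= Sp c^2) by apply pow2_ge_0. assert (0 <= Sm c^2) by apply pow2_ge_0.
    assert (0 < N2 c * N3 c) by nra. apply Rmult_le_pos; nra. }
  nra.
Qed.

Lemma P_le_n (N1 N2 N3 Sp Sm : R -> R) t : WH_solution N1 N2 N3 Sp Sm ->
  N1 t < 0 -> 0 < N2 t -> 0 < N3 t ->
  - N1 t * (N2 t * N3 t) <= (N2 t + N3 t) / 6 /\ - N1 t * (N2 t + N3 t) <= 2/3.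
Proof.
  intros H h1 h2 h3. destruct (pointwise N1 N2 N3 Sp Sm t H h1 h2 h3) as [c _].
  assert (0 <= Sp t^2) by apply pow2_ge_0. assert (0 <= Sm t^2) by apply pow2_ge_0.
  assert (0 <= (N2 t - N3 t)^2) by apply pow2_ge_0. assert (0 <= (-N1 t)^2) by apply pow2_ge_0.
  assert (Z: - N1 t * (N2 t + N3 t) <= 2/3) by nra.
  split; [|exact Z].
  assert (4 * (N2 t * N3 t) <= (N2 t + N3 t)^2) by nra.
  assert (0 < - N1 t) by lra.
  assert (- N1 t * (N2 t * N3 t) <= - N1 t * (N2 t + N3 t)^2 / 4).
  { apply (Rmult_le_reg_r 4); [lra|]. field_simplify. nra. }
  assert (- N1 t * (N2 t + N3 t)^2 / 4 = (- N1 t * (N2 t + N3 t)) * (N2 t + N3 t) / 4) by (field).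
  assert ((- N1 t * (N2 t + N3 t)) * (N2 t + N3 t) <= 2/3 * (N2 t + N3 t)) by (apply Rmult_le_compat_r; lra).
  lra.
Qed.

Lemma P_unb (N1 N2 N3 Sp Sm : R -> R) : WH_solution N1 N2 N3 Sp Sm ->
  (forall t : R, N1 t < 0 /\ 0 < N2 t /\ 0 < N3 t) ->
  forall K, exists t, K < - N1 t * (N2 t * N3 t).
Proof.
  intros H Hsg K. apply NNPP; intro HK.
  assert (HPK: forall t, - N1 t * (N2 t * N3 t) <= K).
  { intro t. apply Rnot_lt_le. exact (not_ex_all_not _ _ HK t). }
  set (P := fun x => - N1 x * (N2 x * N3 x)).
  assert (HP0: 0 < P 0). { destruct (Hsg 0) as [a [b c]]. unfold P. assert (0 < N2 0 * N3 0) by nra. nra. }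
  assert (HK0: 0 < K) by (specialize (HPK 0); fold (P 0) in HPK; lra).
  set (k0 := 6 * P 0).
  assert (Hn0: forall x, 0 <= x -> k0 <= N2 x + N3 x).
  { intros x Hx. destruct (Hsg x) as [a [b c]].
    pose proof (P_mono N1 N2 N3 Sp Sm H Hsg 0 x Hx).
    destruct (P_le_n N1 N2 N3 Sp Sm x H a b c). unfold k0, P. lra. }
  destruct s3 as [Hs Hs0]. set (s := sqrt 3) in *.
  set (b := 13/(6*s)). set (c := 5 + 13/(6*s)*(2*s+3) + (13/(6*s))^2/k0^2).
  assert (Hb: 0 < b) by (unfold b; apply Rdiv_lt_0_compat; lra).
  assert (Hk0: 0 < k0) by (unfold k0; lra).
  assert (Hc: 0 <= c).
  { unfold c. assert (0 <= (13/(6*s))^2/k0^2).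
    { unfold Rdiv at 2. apply Rmult_le_pos. apply pow2_ge_0. left; apply Rinv_0_lt_compat; nra. }
    assert (0 < 13/(6*s)*(2*s+3)) by (apply Rmult_lt_0_compat; [fold b; lra| lra]). lra. }
  set (F := fun x => (Sp x - b * (Sm x * (N2 x - N3 x) / (- N1 x + (N2 x + N3 x))))
                     + c/6 * ln (- N1 x * (N2 x * N3 x))).
  set (F' := fun x => (- (2 - WH_q (Sp x) (Sm x)) * Sp x - 3 * WH_Splus (N1 x) (N2 x) (N3 x)
                      - b * Wp_expr (- N1 x) (N2 x + N3 x) (N2 x - N3 x) (Sp x) (Sm x) s)
                      + c/6 * (6 * (Sp x ^2 + Sm x ^2))).
  assert (HF: forall x, derivable_pt_lim F x (F' x)).
  { intro x. destruct (Hsg x) as [h1 [h2 h3]].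
    destruct (sol_at N1 N2 N3 Sp Sm x H) as [_ [_ [_ [d4 _]]]].
    eapply deq. unfold F.
    apply (dplus (fun x => Sp x - b * (Sm x * (N2 x - N3 x) / (- N1 x + (N2 x + N3 x))))
                 (fun x => c/6 * ln (- N1 x * (N2 x * N3 x)))).
    apply (dminus Sp (fun x => b * (Sm x * (N2 x - N3 x) / (- N1 x + (N2 x + N3 x))))).
    exact d4.
    apply (dmul (fun _ => b) (fun x => Sm x * (N2 x - N3 x) / (- N1 x + (N2 x + N3 x)))).
    apply derivable_pt_lim_const. apply (dW N1 N2 N3 Sp Sm); auto.
    apply (dmul (fun _ => c/6) (fun x => ln (- N1 x * (N2 x * N3 x)))).
    apply derivable_pt_lim_const. apply (dlnP N1 N2 N3 Sp Sm); auto.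
    unfold F'. fold s. ring. }
  assert (HF': forall x, 0 <= x -> F' x >= 1/2).
  { intros x Hx. destruct (Hsg x) as [h1 [h2 h3]].
    destruct (pointwise N1 N2 N3 Sp Sm x H h1 h2 h3) as [cx dx].
    pose proof (C2' (- N1 x) (N2 x + N3 x) (N2 x - N3 x) (Sp x) (Sm x) s k0) as HC.
    assert (E: - (2 - WH_q (Sp x) (Sm x)) * Sp x - 3 * WH_Splus (N1 x) (N2 x) (N3 x) =
      - (2 - 2*(Sp x^2+Sm x^2)) * Sp x - 3 * (/2 * ((N2 x - N3 x)^2 - 2*(- N1 x)^2 - (- N1 x)*(N2 x + N3 x)))).
    { unfold WH_q, WH_Splus. ring. }
    unfold F'. rewrite E. fold b in HC. fold c in HC.
    assert (c/6 * (6 * (Sp x ^2 + Sm x ^2)) = c * (Sp x ^2 + Sm x ^2)) by field.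
    rewrite H0. apply HC; auto; lra. }
  assert (HFb: forall x, F x <= 1 + b + c/6 * ln K).
  { intro x. destruct (Hsg x) as [h1 [h2 h3]].
    destruct (pointwise N1 N2 N3 Sp Sm x H h1 h2 h3) as [cx dx].
    assert (Sp x <= 1).
    { assert (0 <= Sm x^2) by apply pow2_ge_0. assert (0 <= (N2 x - N3 x)^2) by apply pow2_ge_0.
      assert (0 <= (-N1 x)^2) by apply pow2_ge_0. assert (0 < N2 x + N3 x) by lra. nra. }
    assert (Rabs (Sm x * (N2 x - N3 x) / (- N1 x + (N2 x + N3 x))) <= 1).
    { destruct (absW (Sm x) (N2 x - N3 x) (- N1 x + (N2 x + N3 x))) as [A _]; try lra.
      assert (Rabs (Sm x) <= 1).
      { assert (0 <= Sp x^2) by apply pow2_ge_0. assert (0 <= (N2 x - N3 x)^2) by apply pow2_ge_0.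
        assert (0 <= (-N1 x)^2) by apply pow2_ge_0. assert (0 < N2 x + N3 x) by lra.
        unfold Rabs; destruct Rcase_abs; nra. }
      lra. }
    assert (- b * (Sm x * (N2 x - N3 x) / (- N1 x + (N2 x + N3 x))) <= b).
    { set (w := Sm x * (N2 x - N3 x) / (- N1 x + (N2 x + N3 x))) in *.
      assert (- w <= 1) by (unfold Rabs in H1; destruct Rcase_abs in H1; lra). nra. }
    assert (ln (- N1 x * (N2 x * N3 x)) <= ln K).
    { specialize (HPK x). destruct (Rle_lt_or_eq_dec _ _ HPK) as [Hl|He].
      left. apply ln_increasing; auto. assert (0 < N2 x * N3 x) by nra. nra.
      rewrite He; lra. }
    unfold F. assert (c/6 * ln (- N1 x * (N2 x * N3 x)) <= c/6 * ln K).
    { apply Rmult_le_compat_l; lra. }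
    lra. }
  set (T := 2 * Rabs (1 + b + c/6 * ln K - F 0) + 2).
  assert (HT: 0 < T) by (unfold T; pose proof (Rabs_pos (1 + b + c/6 * ln K - F 0)); lra).
  destruct (MVT_cor2 F F' 0 T HT (fun x _ => HF x)) as [xi [Exi Hxi]].
  specialize (HF' xi ltac:(lra)). specialize (HFb T).
  assert (F' xi * (T - 0) >= 1/2 * T) by nra.
  pose proof (Rle_abs (1 + b + c/6 * ln K - F 0)). unfold T in *. lra.
Qed.

Lemma n_large (N1 N2 N3 Sp Sm : R -> R) : WH_solution N1 N2 N3 Sp Sm ->
  (forall t : R, N1 t < 0 /\ 0 < N2 t /\ 0 < N3 t) ->
  forall M, exists T, forall t, T <= t -> M <= N2 t + N3 t.
Proof.
  intros H Hsg M. destruct (P_unb N1 N2 N3 Sp Sm H Hsg (M/6)) as [T HT].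
  exists T. intros t Ht. pose proof (P_mono N1 N2 N3 Sp Sm H Hsg T t Ht).
  destruct (Hsg t) as [a [b c]]. destruct (P_le_n N1 N2 N3 Sp Sm t H a b c). lra.
Qed.

Theorem mainTheorem16 (N1 N2 N3 Sp Sm : R -> R) :
  WH_solution N1 N2 N3 Sp Sm ->
  (forall t : R, N1 t < 0 /\ 0 < N2 t /\ 0 < N3 t) ->
  forall eps : R, 0 < eps ->
  exists T : R, forall t : R, T <= t ->
    - N1 t * (N2 t + N3 t) >= / 2 - eps.
Proof.
  intros H Hsg eps Heps.
  set (e1 := Rmin eps (1/4)).
  assert (He1: 0 < e1 <= 1/4 /\ e1 <= eps) by (unfold e1; unfold Rmin; destruct Rle_dec; lra).
  set (c0 := 1/2 - e1/2). set (eta := e1/4).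
  destruct (n_large N1 N2 N3 Sp Sm H Hsg (40/e1 + 1)) as [T0 HT0].
  destruct s3 as [Hs Hs0]. set (s := sqrt 3) in *.
  set (L := fun x => ln (- N1 x * (N2 x + N3 x)) - Sm x * (N2 x - N3 x) / (- N1 x + (N2 x + N3 x)) / s).
  set (L' := fun x => (4*(Sp x^2+Sm x^2) - 2*Sp x + 2*s*Sm x*(N2 x - N3 x)/(N2 x + N3 x))
                      - Wp_expr (- N1 x) (N2 x + N3 x) (N2 x - N3 x) (Sp x) (Sm x) s / s).
  assert (HL: forall x, derivable_pt_lim L x (L' x)).
  { intro x. destruct (Hsg x) as [h1 [h2 h3]].
    eapply deq. unfold L.
    apply (dminus (fun x => ln (- N1 x * (N2 x + N3 x)))
                  (fun x => Sm x * (N2 x - N3 x) / (- N1 x + (N2 x + N3 x)) / s)).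
    apply (dlnZ N1 N2 N3 Sp Sm); auto.
    apply (ddiv (fun x => Sm x * (N2 x - N3 x) / (- N1 x + (N2 x + N3 x))) (fun _ => s)).
    apply (dW N1 N2 N3 Sp Sm); auto. apply derivable_pt_lim_const. lra.
    unfold L', Rsqr. fold s. field. lra. }
  assert (Hkey: forall x, T0 <= x ->
     L' x >= 3/2 - 3*(- N1 x * (N2 x + N3 x)) - eta /\
     Rabs (Sm x * (N2 x - N3 x) / (- N1 x + (N2 x + N3 x))) / s <= eta).
  { intros x Hx. specialize (HT0 x Hx). destruct (Hsg x) as [h1 [h2 h3]].
    destruct (pointwise N1 N2 N3 Sp Sm x H h1 h2 h3) as [cx dx].
    assert (Hn1: 1 <= N2 x + N3 x).
    { assert (0 < 40/e1) by (apply Rdiv_lt_0_compat; lra). lra. }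
    destruct (C4' (- N1 x) (N2 x + N3 x) (N2 x - N3 x) (Sp x) (Sm x) s) as [A B]; auto; try lra.
    assert (10/(N2 x + N3 x) <= eta).
    { unfold eta. apply (Rmult_le_reg_r (4*(N2 x + N3 x))). lra.
      field_simplify; try lra.
      assert (40 <= e1 * (N2 x + N3 x)).
      { assert (e1 * (40/e1) = 40) by (field; lra).
        assert (e1 * (40/e1 + 1) <= e1 * (N2 x + N3 x)) by (apply Rmult_le_compat_l; lra). nra. }
      lra. }
    assert (1/(N2 x + N3 x) <= 10/(N2 x + N3 x)).
    { unfold Rdiv. apply Rmult_le_compat_r. left; apply Rinv_0_lt_compat; lra. lra. }
    split. unfold L'. replace (2 * s * Sm x * (N2 x - N3 x) / (N2 x + N3 x)) with
        (2 * s * Sm x * (N2 x - N3 x) / (N2 x + N3 x)) by reflexivity.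
    replace (- N1 x * (N2 x + N3 x)) with ((- N1 x) * (N2 x + N3 x)) by reflexivity. lra.
    lra. }
  assert (Hc0: 0 < c0) by (unfold c0; lra).
  set (lam := ln c0 - eta).
  assert (Hbad: forall x, T0 <= x -> L x <= lam -> L' x >= e1).
  { intros x Hx HLx. destruct (Hkey x Hx) as [A B]. destruct (Hsg x) as [h1 [h2 h3]].
    set (Zx := - N1 x * (N2 x + N3 x)) in *.
    assert (HZ: 0 < Zx) by (unfold Zx; nra).
    set (w := Sm x * (N2 x - N3 x) / (- N1 x + (N2 x + N3 x))) in *.
    assert (w / s <= eta).
    { apply (Rle_trans _ (Rabs w / s)); auto. unfold Rdiv. apply Rmult_le_compat_r.
      left; apply Rinv_0_lt_compat; lra. apply RRle_abs. }
    assert (ln Zx <= ln c0).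
    { unfold L, lam in *. fold Zx w in HLx. lra. }
    assert (Zx <= c0).
    { destruct (Rle_lt_dec Zx c0); auto. pose proof (ln_increasing c0 Zx Hc0 r). lra. }
    unfold c0, eta in *. lra. }
  set (D := (Rabs (lam - L T0) + 1) / e1).
  assert (HD: 0 < D) by (unfold D; apply Rdiv_lt_0_compat; [pose proof (Rabs_pos (lam - L T0)); lra|lra]).
  exists (T0 + D).
  assert (HT1: exists T1, T0 <= T1 <= T0 + D /\ lam < L T1).
  { apply NNPP; intro HN.
    assert (Hall: forall u, T0 <= u <= T0 + D -> L u <= lam).
    { intros u Hu. apply Rnot_lt_le. intro Hl. apply HN. exists u. split; auto. }
    destruct (MVT_cor2 L L' T0 (T0 + D) ltac:(lra) (fun x _ => HL x)) as [xi [Exi Hxi]].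
    assert (L' xi >= e1) by (apply Hbad; [lra| apply Hall; lra]).
    assert (L' xi * (T0 + D - T0) >= e1 * D) by nra.
    assert (e1 * D = Rabs (lam - L T0) + 1) by (unfold D; field; lra).
    pose proof (Rle_abs (lam - L T0)).
    specialize (Hall (T0 + D) ltac:(lra)). lra. }
  destruct HT1 as [T1 [HT1a HT1b]].
  assert (Hstay: forall t, T1 <= t -> lam <= L t).
  { intros t Ht. apply Rnot_lt_le. intro Hlt.
    assert (HcL: forall x, continuity_pt L x).
    { intro x. apply (derivable_continuous_pt L x (exist _ (L' x) (HL x))). }
    destruct (continuity_ab_min L T1 t Ht (fun x _ => HcL x)) as [u0 [Hmin Hu0]].
    assert (Hu0l: L u0 <= L t) by (apply Hmin; lra).
    assert (HT1u: T1 < u0).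
    { destruct (Rle_lt_or_eq_dec _ _ (proj1 Hu0)) as [h|h]; auto. subst u0. lra. }
    pose proof (HcL u0) as Hc. unfold continuity_pt, continue_in, limit1_in, limit_in in Hc.
    destruct (Hc (lam - L u0) ltac:(lra)) as [del [Hdel Hclose]].
    set (v := Rmax T1 (u0 - del/2)).
    assert (Hv: T1 <= v /\ u0 - del/2 <= v /\ v < u0).
    { unfold v, Rmax; destruct Rle_dec; lra. }
    destruct (MVT_cor2 L L' v u0 ltac:(lra) (fun x _ => HL x)) as [xi [Exi Hxi]].
    assert (HLxi: L xi <= lam).
    { assert (Hd: Rabs (L xi - L u0) < lam - L u0).
      { apply (Hclose xi). split. split; [exact I|lra]. simpl; unfold R_dist.
        unfold Rabs; destruct Rcase_abs; lra. }
      unfold Rabs in Hd; destruct Rcase_abs in Hd; lra. }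
    assert (L' xi >= e1) by (apply Hbad; auto; lra).
    assert (L u0 <= L v) by (apply Hmin; lra).
    assert (L' xi * (u0 - v) > 0) by (apply Rmult_lt_0_compat; lra). lra. }
  intros t Ht.
  assert (HLt: lam <= L t) by (apply Hstay; lra).
  destruct (Hkey t ltac:(lra)) as [_ B]. destruct (Hsg t) as [h1 [h2 h3]].
  set (Zt := - N1 t * (N2 t + N3 t)) in *.
  assert (HZ: 0 < Zt) by (unfold Zt; nra).
  set (w := Sm t * (N2 t - N3 t) / (- N1 t + (N2 t + N3 t))) in *.
  assert (- eta <= w / s).
  { assert (- (Rabs w / s) <= w/s).
    { assert (0 <= (w + Rabs w) / s).
      { unfold Rdiv. apply Rmult_le_pos. unfold Rabs; destruct Rcase_abs; lra.
        left; apply Rinv_0_lt_compat; lra. }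
      assert ((w + Rabs w) / s = w/s + Rabs w / s) by (field; lra). lra. }
    lra. }
  assert (Hln: ln c0 - 2*eta <= ln Zt) by (unfold L, lam in HLt; fold Zt w in HLt; lra).
  assert (Hex: exp (ln c0 - 2*eta) <= Zt).
  { rewrite <- (exp_ln Zt HZ). destruct (Rle_lt_or_eq_dec _ _ Hln) as [h|h].
    left; apply exp_increasing; auto. rewrite h; lra. }
  pose proof (exp_ineq1_le (- (2*eta))).
  replace (ln c0 - 2*eta) with (ln c0 + - (2*eta)) in Hex by ring.
  rewrite exp_plus, exp_ln in Hex by lra.
  assert (c0 * (1 + - (2*eta)) <= c0 * exp (- (2*eta))) by (apply Rmult_le_compat_l; lra).
  unfold c0, eta in *. assert (0 <= e1 * e1) by nra. lra.
Qed.
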